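(* Let $d\ge2$, $m,c>0$ and $p,p_*\in\mathbb{R}^d$ with $p\neq p_*$. Then \[ \tilde\Lambda\,\Pi_{\hat k^\perp}\,\tilde\Lambda=\frac{\big((p^\mu\cdot p_{*\mu})^2-(mc)^4\big)I_d-(mc)^2\,(p\otimes p+p_*\otimes p_* )+(p^\mu\cdot p_{*\mu})\,(p\otimes p_*+p_*\otimes p)}{(p^\mu\cdot p_{*\mu})^2-(mc)^4}, \] where $p^\mu\cdot p_{*\mu}=p_0p_{0*}-p\cdot p_*$.
   Context: $p_0=\sqrt{(mc)^2+|p|^2}$, $p_{0*}=\sqrt{(mc)^2+|p_*|^2}$, $p^\mu=(p_0,p)$, $p_*^\mu=(p_{0*},p_* )$. Define $s=(p_0+p_{0*})^2-|p+p_*|^2$, $v=\frac{p+p_*}{p_0+p_{0*}}$, $\rho=\frac{p_0+p_{0*}}{\sqrt s}$, the symmetric matrix $\tilde\Lambda=I_d+(\rho-1)\frac{v\otimes v}{|v|^2}$ ($=I_d$ if $v=0$), and the Lorentz transformation $\Lambda=\begin{pmatrix}\rho&-\rho v^T\\-\rho v&\tilde\Lambda\end{pmatrix}$. Let $\tilde p,\tilde p_*$ be the spatial parts of $\Lambda p^\mu$, $\Lambda p_*^\mu$, $\hat k=\frac{\tilde p-\tilde p_*}{|\tilde p-\tilde p_*|}$, and $\Pi_{\hat k^\perp}=I_d-\hat k\otimes\hat k$. *)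

(* Defs.v *)
From mathcomp Require Import all_boot all_order all_algebra.
Set Implicit Arguments. Unset Strict Implicit. Unset Printing Implicit Defensive.
Import Order.TTheory GRing.Theory Num.Theory.
Local Open Scope ring_scope.

Section Lorentz.
Variables (R : rcfType) (d : nat).

Definition dotv (x y : 'cV[R]_d) : R := \sum_(i < d) x i 0 * y i 0.
Definition sqnorm (x : 'cV[R]_d) : R := dotv x x.
Definition normv (x : 'cV[R]_d) : R := Num.sqrt (sqnorm x).

Definition outer (x y : 'cV[R]_d) : 'M[R]_d := x *m y^T.

Definition p0 (m c : R) (p : 'cV[R]_d) : R := Num.sqrt ((m * c) ^+ 2 + sqnorm p).

Definition minkdot (m c : R) (p q : 'cV[R]_d) : R := p0 m c p * p0 m c q - dotv p q.

Definition s_inv (m c : R) (p q : 'cV[R]_d) : R :=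
  (p0 m c p + p0 m c q) ^+ 2 - sqnorm (p + q).

Definition vel (m c : R) (p q : 'cV[R]_d) : 'cV[R]_d :=
  (p0 m c p + p0 m c q)^-1 *: (p + q).

Definition rho (m c : R) (p q : 'cV[R]_d) : R :=
  (p0 m c p + p0 m c q) / Num.sqrt (s_inv m c p q).

Definition LambdaT (m c : R) (p q : 'cV[R]_d) : 'M[R]_d :=
  let v := vel m c p q in
  if v == 0 then 1%:M
  else 1%:M + ((rho m c p q - 1) / sqnorm v) *: outer v v.

(* spatial part of Lambda applied to the four-vector (x0, x):
   -rho v x0 + \tilde\Lambda x *)
Definition boost_spatial (m c : R) (p q : 'cV[R]_d) (x0 : R) (x : 'cV[R]_d)
  : 'cV[R]_d :=
  - (rho m c p q * x0) *: vel m c p q + LambdaT m c p q *m x.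

Definition ptil (m c : R) (p q : 'cV[R]_d) : 'cV[R]_d :=
  boost_spatial m c p q (p0 m c p) p.
Definition pstil (m c : R) (p q : 'cV[R]_d) : 'cV[R]_d :=
  boost_spatial m c p q (p0 m c q) q.

Definition khat (m c : R) (p q : 'cV[R]_d) : 'cV[R]_d :=
  (normv (ptil m c p q - pstil m c p q))^-1 *: (ptil m c p q - pstil m c p q).

Definition Pi_perp (m c : R) (p q : 'cV[R]_d) : 'M[R]_d :=
  1%:M - outer (khat m c p q) (khat m c p q).

End Lorentz.

(* Main.v *)
Require Import Defs.
From mathcomp Require Import all_boot all_order all_algebra.
From mathcomp Require Import ring lra.
Import Order.TTheory GRing.Theory Num.Theory.
Local Open Scope ring_scope.

Lemma dotv_gen (R : rcfType) (d : nat) (p q x y : 'cV[R]_d) (x1 x2 y1 y2 : R) :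
  (forall i, x i 0 = x1 * p i 0 + x2 * q i 0) ->
  (forall i, y i 0 = y1 * p i 0 + y2 * q i 0) ->
  dotv x y = x1*y1 * sqnorm p + (x1*y2 + x2*y1) * dotv p q + x2*y2 * sqnorm q.
Proof.
move=> hx hy; rewrite /sqnorm /dotv !mulr_sumr -!big_split /=.
by apply: eq_bigr => i _; rewrite hx hy; ring.
Qed.
Arguments dotv_gen {R d}.

Lemma sqnorm_ge0 (R : rcfType) (d : nat) (x : 'cV[R]_d) : 0 <= sqnorm x.
Proof. by rewrite /sqnorm /dotv; apply: sumr_ge0 => i _; rewrite -expr2 sqr_ge0. Qed.
Arguments sqnorm_ge0 {R d}.

Lemma sqnorm_gt0 (R : rcfType) (d : nat) (x : 'cV[R]_d) : x != 0 -> 0 < sqnorm x.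
Proof.
move=> hx; rewrite lt_def sqnorm_ge0 andbT; apply/negP => /eqP h0.
case/negP: hx; apply/eqP/matrixP => i j; rewrite !ord1 mxE.
have hge : forall k : 'I_d, true -> 0 <= x k 0 * x k 0 by move=> k _; rewrite -expr2 sqr_ge0.
by have /eqP := @psumr_eq0P _ _ _ _ hge h0 i isT; rewrite mulf_eq0 orbb => /eqP.
Qed.
Arguments sqnorm_gt0 {R d}.

Lemma trmx_dot (R : rcfType) (d : nat) (x y : 'cV[R]_d) : x^T *m y = (dotv x y)%:M.
Proof.
apply/matrixP => i j; rewrite !ord1 !mxE eqxx mulr1n /dotv.
by apply: eq_bigr => k _; rewrite !mxE.
Qed.
Arguments trmx_dot {R d}.

Lemma outerZ (R : rcfType) (d : nat) (x y : 'cV[R]_d) (k l : R) :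
  outer (k *: x) (l *: y) = (k * l) *: outer x y.
Proof. by rewrite /outer linearZ /= -scalemxAl -scalemxAr scalerA. Qed.
Arguments outerZ {R d}.

Lemma cs (R : rcfType) (d : nat) (p q : 'cV[R]_d) :
  dotv p q ^+ 2 <= sqnorm p * sqnorm q.
Proof.
set a := sqnorm p; set b := sqnorm q; set C := dotv p q.
have H t : 0 <= a - 2 * t * C + t ^+ 2 * b.
  have := sqnorm_ge0 (p - t *: q).
  rewrite /sqnorm (@dotv_gen _ _ p q _ _ 1 (- t) 1 (- t)).
  - by move=> h; apply: le_trans h _; rewrite /a /b /C /sqnorm le_eqVlt; apply/orP; left; apply/eqP; ring.
  - by move=> i; rewrite !mxE; ring.
  - by move=> i; rewrite !mxE; ring.
have hb : 0 <= b by exact: sqnorm_ge0.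
have ha : 0 <= a by exact: sqnorm_ge0.
case: (ltrgt0P b) => [bp|bn|b0].
- have := H (C / b).
  have -> : a - 2 * (C / b) * C + (C / b) ^+ 2 * b = (a * b - C ^+ 2) / b.
    by field; rewrite gt_eqF.
  by rewrite pmulr_lge0 ?invr_gt0 // subr_ge0.
- by exfalso; lra.
- case: (C =P 0) => [->|Cn0]; first by rewrite expr0n /= mulr_ge0.
  have := H ((a + 1) / (2 * C)); rewrite b0.
  have -> : a - 2 * ((a + 1) / (2 * C)) * C + ((a + 1) / (2 * C)) ^+ 2 * 0 = -1.
    by field; apply/eqP.
  lra.
Qed.
Arguments cs {R d}.

Theorem propositionA4 (R : rcfType) (d : nat) (m c : R) (p q : 'cV[R]_d) :
  (2 <= d)%N -> 0 < m -> 0 < c -> p != q ->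
  let L := LambdaT m c p q in
  let g := minkdot m c p q in
  L *m Pi_perp m c p q *m L =
    (g ^+ 2 - (m * c) ^+ 4)^-1 *:
      ((g ^+ 2 - (m * c) ^+ 4) *: 1%:M
       - (m * c) ^+ 2 *: (outer p p + outer q q)
       + g *: (outer p q + outer q p)).
Proof.
move=> _ hm hc hpq L g.
have hmu : 0 < m * c by rewrite mulr_gt0.
have -> : (m * c) ^+ 4 = ((m * c) ^+ 2) ^+ 2 by rewrite -exprM.
move: hmu; set mu := m * c => hmu.
have hmu2 : 0 < mu ^+ 2 by rewrite exprn_gt0.
have ep : p0 m c p ^+ 2 = mu ^+ 2 + sqnorm p.
  by rewrite /p0 sqr_sqrtr // addr_ge0 ?sqr_ge0 ?sqnorm_ge0.
have eq0 : p0 m c q ^+ 2 = mu ^+ 2 + sqnorm q.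
  by rewrite /p0 sqr_sqrtr // addr_ge0 ?sqr_ge0 ?sqnorm_ge0.
have pp : 0 < p0 m c p.
  by rewrite /p0 sqrtr_gt0 -/mu; have := sqnorm_ge0 p; lra.
have qp : 0 < p0 m c q.
  by rewrite /p0 sqrtr_gt0 -/mu; have := sqnorm_ge0 q; lra.
have hpq2 : 0 < sqnorm (p - q) by apply: sqnorm_gt0; rewrite subr_eq0.
have epq : sqnorm (p - q) = sqnorm p - 2 * dotv p q + sqnorm q.
  rewrite /sqnorm (dotv_gen p q _ _ 1 (-1) 1 (-1)); first by rewrite /sqnorm; ring.
  by move=> i; rewrite !mxE; ring. by move=> i; rewrite !mxE; ring.
have hcs := cs p q.
have hg : mu ^+ 2 < g.
  rewrite /g /minkdot.
  have hprod : (p0 m c p * p0 m c q) ^+ 2 - (mu ^+ 2 + dotv p q) ^+ 2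
     = mu ^+ 2 * sqnorm (p - q) + (sqnorm p * sqnorm q - dotv p q ^+ 2).
    by rewrite exprMn ep eq0 epq; ring.
  have h1 : 0 < mu ^+ 2 * sqnorm (p - q) by rewrite mulr_gt0.
  have h2 : 0 < p0 m c p * p0 m c q by rewrite mulr_gt0.
  move: hprod h1 h2 hcs; set u := p0 m c p * p0 m c q; set X := mu ^+ 2 + dotv p q.
  move=> hprod h1 h2 hcs.
  suff : X < u by rewrite /X; lra.
  case: (ltrP X u) => // hle; exfalso.
  have : 0 <= (X - u) * (X + u) by apply: mulr_ge0; lra.
  have -> : (X - u) * (X + u) = X ^+ 2 - u ^+ 2 by ring.
  lra.
have hs : s_inv m c p q = 2 * mu ^+ 2 + 2 * g.
  rewrite /s_inv /g /minkdot /sqnorm (dotv_gen p q _ _ 1 1 1 1).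
  - by rewrite sqrrD ep eq0 -/mu /sqnorm; ring.
  - by move=> i; rewrite !mxE; ring.
  - by move=> i; rewrite !mxE; ring.
have hs0 : 0 < s_inv m c p q by rewrite hs; lra.
have hr2 : Num.sqrt (s_inv m c p q) ^+ 2 = 2 * mu ^+ 2 + 2 * g.
  by rewrite sqr_sqrtr; [exact: hs | exact: ltW].
have hr : 0 < Num.sqrt (s_inv m c p q) by rewrite sqrtr_gt0.
have ea : sqnorm p = p0 m c p ^+ 2 - mu ^+ 2 by rewrite ep; ring.
have eb : sqnorm q = p0 m c q ^+ 2 - mu ^+ 2 by rewrite eq0; ring.
move: hr2 hr; set r := Num.sqrt (s_inv m c p q) => hr2 hr.
have eC : dotv p q = p0 m c p * p0 m c q + mu ^+ 2 - r ^+ 2 / 2.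
  by rewrite hr2 /g /minkdot; field.
have erho : rho m c p q = (p0 m c p + p0 m c q) / r by [].
have hP : 0 < p0 m c p + p0 m c q by lra.
move: erho hP; set P := p0 m c p + p0 m c q => erho hP.
set S := p + q.
have hSS : sqnorm S = P ^+ 2 - r ^+ 2.
  by rewrite /r sqr_sqrtr ?ltW // /s_inv -/P; ring.
set alpha := (r * (P + r))^-1.
have hL : L = 1%:M + alpha *: outer S S.
  rewrite /L /LambdaT /=.
  have ev : vel m c p q = P^-1 *: S by [].
  rewrite ev; case: eqP => [/eqP|/eqP hv].
    rewrite scaler_eq0 invr_eq0 (gt_eqF hP) /= => /eqP ->.
    by rewrite /outer mul0mx scaler0 addr0.
  have hS : S != 0 by apply: contra hv => /eqP ->; rewrite scaler0.
  have hS2 := sqnorm_gt0 S hS.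
  rewrite outerZ; congr (_ + _); rewrite scalerA; congr (_ *: _).
  rewrite /sqnorm (dotv_gen S S _ _ P^-1 0 P^-1 0); last 2 first.
    by move=> i; rewrite !mxE; ring.
    by move=> i; rewrite !mxE; ring.
  rewrite -/(sqnorm S) hSS erho /alpha.
  have : P ^+ 2 - r ^+ 2 != 0 by rewrite -hSS gt_eqF.
  move=> h; field.
  have hPr : 0 < P + r by lra.
  by rewrite h (gt_eqF hPr) (gt_eqF hr) (gt_eqF hP).
have Lmul x : L *m x = x + (alpha * dotv S x) *: S.
  by rewrite hL mulmxDl mul1mx /outer -scalemxAl -mulmxA trmx_dot mul_mx_scalar scalerA.
have Ltr : L^T = L.
  by rewrite hL linearD /= trmx1 linearZ /= /outer trmx_mul trmxK.
have dSp : dotv S p = sqnorm p + dotv p q.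
  rewrite (dotv_gen p q _ _ 1 1 1 0); first by ring.
  by move=> i; rewrite !mxE; ring. by move=> i; ring.
have dSq : dotv S q = dotv p q + sqnorm q.
  rewrite (dotv_gen p q _ _ 1 1 0 1); first by ring.
  by move=> i; rewrite !mxE; ring. by move=> i; ring.
set a' := - (p0 m c p - p0 m c q) / (P + r).
have hPr : P + r != 0 by rewrite gt_eqF //; lra.
have hr0 : r != 0 by rewrite gt_eqF.
have hw : ptil m c p q - pstil m c p q = a' *: S + (p - q).
  rewrite /ptil /pstil /boost_spatial !Lmul erho.
  have ev : vel m c p q = P^-1 *: S by [].
  rewrite ev dSp dSq ea eb eC /a' /alpha.
  apply/matrixP => i j; rewrite /S !mxE /P.
  by field; rewrite -/P hPr hr0 gt_eqF.
have dSw : dotv S (a' *: S + (p - q))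
   = (a' + 1) * sqnorm p + 2 * a' * dotv p q + (a' - 1) * sqnorm q.
  rewrite (dotv_gen p q _ _ 1 1 (a' + 1) (a' - 1)); first by ring.
  by move=> i; rewrite !mxE; ring. by move=> i; rewrite !mxE; ring.
have Lw : L *m (ptil m c p q - pstil m c p q) = p - q.
  rewrite hw Lmul dSw ea eb eC /a' /alpha.
  apply/matrixP => i j; rewrite /S !mxE /P.
  by field; rewrite -/P hPr hr0.
have hww : sqnorm (ptil m c p q - pstil m c p q) = r ^+ 2 - 4 * mu ^+ 2.
  rewrite hw /sqnorm (dotv_gen p q _ _ (a' + 1) (a' - 1) (a' + 1) (a' - 1)).
  - rewrite -/(sqnorm p) -/(sqnorm q) ea eb eC /a' /P.
    by field; rewrite -/P hPr.
  - by move=> i; rewrite !mxE; ring.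
  - by move=> i; rewrite !mxE; ring.
have hPi : Pi_perp m c p q = 1%:M - (r ^+ 2 - 4 * mu ^+ 2)^-1 *:
     outer (ptil m c p q - pstil m c p q) (ptil m c p q - pstil m c p q).
  by rewrite /Pi_perp /khat outerZ -invfM -expr2 /normv sqr_sqrtr ?sqnorm_ge0 // hww.
rewrite hPi mulmxBr mulmx1 mulmxBl -scalemxAr -scalemxAl.
have -> : L *m outer (ptil m c p q - pstil m c p q) (ptil m c p q - pstil m c p q) *m L
   = outer (L *m (ptil m c p q - pstil m c p q)) (L *m (ptil m c p q - pstil m c p q)).
  by rewrite /outer trmx_mul Ltr !mulmxA.
rewrite Lw.
have -> : L *m L = L + alpha *: ((L *m S) *m S^T).
  by rewrite {2}hL mulmxDr mulmx1 /outer -scalemxAr mulmxA.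
rewrite Lmul -/(sqnorm S) hSS hL.
apply/matrixP => i j; rewrite !mxE !big_ord1 !mxE.
rewrite /S /g /minkdot eC /alpha ?mxE.
have hr4 : r ^+ 2 - 4 * mu ^+ 2 != 0 by rewrite gt_eqF // hr2; lra.
field.
rewrite hr4 hPr hr0 !andbT.
set u := p0 m c p * p0 m c q.
have -> : (u * 2 - ((u + mu ^+ 2) * 2 - r ^+ 2)) ^+ 2 + - mu ^+ 2 ^+ 2 * 4
   = r ^+ 2 * (r ^+ 2 - 4 * mu ^+ 2) by ring.
by rewrite mulf_neq0 // expf_neq0.
Qed.
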